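(* For real $0<y<2\pi$, $$\sum_{n=0}^{\infty} (-1)^n B_n R_n(y)=e^{y}\left(y\ln(1-e^{-y})-\mathrm{Li}_2(e^{-y})+\frac{\pi^2}{6}\right).$$
   Context: For an integer $n\ge 0$ and complex $y$, $R_n(y)=e^y-1-\frac{y}{1!}-\frac{y^2}{2!}-\dots-\frac{y^n}{n!}=e^y-\sum_{k=0}^n\frac{y^k}{k!}$. $B_n$ are the Bernoulli numbers, defined by $\frac{z}{e^z-1}=\sum_{n\ge0}B_n\frac{z^n}{n!}$ ($|z|<2\pi$). $\mathrm{Li}_2(z)=\sum_{n\ge1}\frac{z^n}{n^2}$ is the dilogarithm. *)

(* Defs.v *)
From Stdlib Require Import Reals.
From Coquelicot Require Import Coquelicot.
Open Scope R_scope.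

(* R_n(y) = e^y - sum_{k=0}^n y^k/k!  (sum_f_R0 f n = f 0 + ... + f n) *)
Definition Rrem (n : nat) (y : R) : R :=
  exp y - sum_f_R0 (fun k => y ^ k / INR (Factorial.fact k)) n.

(* The generating-function definition of the Bernoulli numbers:
   z/(e^z-1) = sum_{n>=0} B_n z^n/n! for 0 < |z| < 2 pi
   (real z; this determines the sequence uniquely, and coincides with the
   complex definition on the real axis). *)
Definition is_Bernoulli (B : nat -> R) : Prop :=
  forall z : R, z <> 0 -> Rabs z < 2 * PI ->
    is_series (fun n => B n * z ^ n / INR (Factorial.fact n)) (z / (exp z - 1)).

Definition Li2 (x : R) : R :=
  Series (fun n : nat => x ^ (S n) / (INR (S n)) ^ 2).

(* Main.v *)
Require Import Defs.
From Stdlib Require Import Reals Lra Lia.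
From Coquelicot Require Import Coquelicot.
Open Scope R_scope.

Lemma mINR k : match k with 0%nat => 1 | S _ => INR k + 1 end = INR (S k).
Proof. destruct k; [simpl; ring| rewrite (S_INR (S k)); reflexivity]. Qed.

Lemma cont_of_der (f : R -> R) x : ex_derive f x -> continuous f x.
Proof. intro H; exact (@ex_derive_continuous R_AbsRing R_NormedModule f x H). Qed.

Lemma ex_RInt_cont (f : R -> R) a b : (forall z, Rmin a b <= z <= Rmax a b -> continuous f z) -> ex_RInt f a b.
Proof. intro H; exact (@ex_RInt_continuous R_CompleteNormedModule f a b H). Qed.

Lemma RInt_lin (f g : R -> R) a b c d : ex_RInt f a b -> ex_RInt g a b ->
  RInt (fun x => c * f x - d * g x) a b = c * RInt f a b - d * RInt g a b.
Proof.
  intros Hf Hg. apply is_RInt_unique.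
  exact (@is_RInt_minus R_NormedModule _ _ a b _ _ (@is_RInt_scal R_NormedModule f a b c _ (RInt_correct _ _ _ Hf))
     (@is_RInt_scal R_NormedModule g a b d _ (RInt_correct _ _ _ Hg))).
Qed.

Definition Ic k : R := RInt (fun x => cos x ^ k) 0 (PI/2).
Definition Jc k : R := RInt (fun x => x^2 * cos x ^ k) 0 (PI/2).

Lemma ex_I k : ex_RInt (fun x => cos x ^ k) 0 (PI/2).
Proof. apply ex_RInt_cont; intros; apply cont_of_der; auto_derive; auto. Qed.
Lemma ex_J k : ex_RInt (fun x => x^2 * cos x ^ k) 0 (PI/2).
Proof. apply ex_RInt_cont; intros; apply cont_of_der; auto_derive; auto. Qed.

Lemma RInt_from_der (F f : R -> R) a b :
  (forall x, is_derive F x (f x)) -> (forall x, ex_derive f x) ->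
  RInt f a b = F b - F a.
Proof.
  intros H1 H2. apply is_RInt_unique.
  apply (@is_RInt_derive R_CompleteNormedModule F f a b); intros; auto. apply cont_of_der; auto.
Qed.

Lemma I_rec k : INR (S (S k)) * Ic (S (S k)) = INR (S k) * Ic k.
Proof.
  assert (H : RInt (fun x => INR (S (S k)) * cos x ^ S (S k) - INR (S k) * cos x ^ k) 0 (PI/2)
            = (fun x => sin x * cos x ^ S k) (PI/2) - (fun x => sin x * cos x ^ S k) 0).
  { apply (RInt_from_der (fun x => sin x * cos x ^ S k)).
    - intros x. auto_derive; auto. rewrite mINR.
      assert (Hs : sin x ^ 2 = 1 - cos x ^ 2) by (generalize (sin2_cos2 x); unfold Rsqr; simpl; lra).
      rewrite !S_INR, <- !tech_pow_Rmult. ring_simplify. rewrite Hs. ring.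
    - intros; auto_derive; auto. }
  cbv beta in H. rewrite cos_PI2, sin_0 in H. rewrite pow_i in H by lia. rewrite !Rmult_0_l, !Rmult_0_r in H.
  rewrite RInt_lin in H by apply ex_I. unfold Ic. lra.
Qed.

Lemma lim_series (a : nat -> R) (l : R) : is_lim_seq (sum_n a) l -> is_series a l.
Proof. intro H; exact H. Qed.
Lemma lim_bound (u v : nat -> R) (l : R) : (forall n, Rabs (u n - l) <= v n) -> is_lim_seq v 0 -> is_lim_seq u l.
Proof.
  intros H Hv. apply (is_lim_seq_le_le (fun n => l - v n) u (fun n => l + v n)).
  - intro n; specialize (H n); apply Rabs_le_between in H; lra.
  - replace (Finite l) with (Finite (l - 0)) by (f_equal; ring). apply is_lim_seq_minus'; auto. apply is_lim_seq_const.
  - replace (Finite l) with (Finite (l + 0)) by (f_equal; ring). apply is_lim_seq_plus'; auto. apply is_lim_seq_const.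
Qed.
Lemma lim_inv_S : is_lim_seq (fun n => / INR (S n)) 0.
Proof.
  replace (Finite 0) with (Rbar_inv p_infty) by reflexivity.
  apply is_lim_seq_inv. apply (proj1 (is_lim_seq_incr_1 INR p_infty)). apply is_lim_seq_INR. discriminate.
Qed.

Lemma RInt_lin3 (f g h : R -> R) a b c d : ex_RInt f a b -> ex_RInt g a b -> ex_RInt h a b ->
  RInt (fun x => f x + c * g x - d * h x) a b = RInt f a b + c * RInt g a b - d * RInt h a b.
Proof.
  intros Hf Hg Hh. apply is_RInt_unique.
  exact (@is_RInt_minus R_NormedModule _ _ a b _ _
     (@is_RInt_plus R_NormedModule _ _ a b _ _ (RInt_correct _ _ _ Hf)
        (@is_RInt_scal R_NormedModule g a b c _ (RInt_correct _ _ _ Hg)))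
     (@is_RInt_scal R_NormedModule h a b d _ (RInt_correct _ _ _ Hh))).
Qed.

Lemma J_rec k : Ic (S (S k)) + (INR (S (S k)))^2/2 * Jc (S (S k)) - INR (S (S k)) * INR (S k) / 2 * Jc k = 0.
Proof.
  assert (H : RInt (fun x => cos x ^ S (S k) + (INR (S (S k)))^2/2 * (x^2 * cos x ^ S (S k))
                     - INR (S (S k)) * INR (S k) / 2 * (x^2 * cos x ^ k)) 0 (PI/2)
     = (fun x => x * cos x ^ S (S k) + INR (S (S k)) / 2 * (x^2 * (sin x * cos x ^ S k))) (PI/2)
     - (fun x => x * cos x ^ S (S k) + INR (S (S k)) / 2 * (x^2 * (sin x * cos x ^ S k))) 0).
  { apply (RInt_from_der (fun x => x * cos x ^ S (S k) + INR (S (S k)) / 2 * (x^2 * (sin x * cos x ^ S k)))).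
    - intros x. auto_derive; auto. rewrite !mINR.
      assert (Hs : sin x ^ 2 = 1 - cos x ^ 2) by (generalize (sin2_cos2 x); unfold Rsqr; simpl; lra).
      rewrite !S_INR, <- !tech_pow_Rmult. set (C := cos x ^ k). set (s := sin x) in *. set (c := cos x) in *. set (r := INR k).
      replace (s * (1 * - s * ((r + 1) * C))) with (- (s^2) * ((r+1) * C)) by ring.
      rewrite Hs. field.
    - intros; auto_derive; auto. }
  cbv beta in H. rewrite cos_PI2, sin_0 in H. rewrite !pow_i in H by lia. rewrite !Rmult_0_l, !Rmult_0_r in H.
  rewrite (RInt_lin3 (fun x => cos x ^ S (S k)) (fun x => x^2 * cos x ^ S (S k)) (fun x => x^2 * cos x ^ k)) in H;
    [| apply ex_I | apply ex_J | apply ex_J]. unfold Ic, Jc. lra.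
Qed.

Lemma xcos_le_sin x : 0 <= x <= PI/2 -> x * cos x <= sin x.
Proof.
  intros Hx.
  assert (H : RInt (fun t => t * sin t) 0 x = (fun t => sin t - t * cos t) x - (fun t => sin t - t * cos t) 0).
  { apply (RInt_from_der (fun t => sin t - t * cos t)).
    - intros t. auto_derive; auto. ring.
    - intros; auto_derive; auto. }
  cbv beta in H. rewrite sin_0 in H.
  assert (0 <= RInt (fun t => t * sin t) 0 x).
  { apply RInt_ge_0. lra. apply ex_RInt_cont. intros; apply cont_of_der; auto_derive; auto.
    intros t Ht. apply Rmult_le_pos. lra. apply sin_ge_0; lra. }
  lra.
Qed.

Lemma cos_nonneg x : 0 <= x <= PI/2 -> 0 <= cos x.
Proof. intros; apply cos_ge_0; lra. Qed.

Lemma J_bound k : Jc (S (S k)) <= Ic k - Ic (S (S k)).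
Proof.
  assert (E : RInt (fun x => 1 * cos x ^ k - 1 * cos x ^ S (S k)) 0 (PI/2) = 1 * Ic k - 1 * Ic (S (S k))).
  { apply RInt_lin; apply ex_I. }
  unfold Jc. rewrite !Rmult_1_l in E. rewrite <- E.
  apply RInt_le. generalize PI_RGT_0; lra. apply ex_J.
  apply ex_RInt_cont. intros; apply cont_of_der; auto_derive; auto.
  intros x Hx. assert (H1 := xcos_le_sin x ltac:(lra)). assert (H2 := cos_nonneg x ltac:(lra)).
  assert (H3 : 0 <= cos x ^ k) by (apply pow_le; auto).
  assert (Hs := sin2_cos2 x). unfold Rsqr in Hs.
  assert (0 <= x * cos x) by (apply Rmult_le_pos; lra).
  assert ((x * cos x) * (x * cos x) <= sin x * sin x) by (apply Rmult_le_compat; lra).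
  assert (E1 : x^2 * cos x ^ S (S k) = (x * cos x) * (x * cos x) * cos x ^ k) by (simpl; ring).
  assert (E2 : 1 * cos x ^ k - 1 * cos x ^ S (S k) = (sin x * sin x) * cos x ^ k).
  { replace (sin x * sin x) with (1 - cos x * cos x) by lra. simpl; ring. }
  rewrite E1, E2. apply Rmult_le_compat_r; auto.
Qed.

Lemma I0 : Ic 0 = PI/2.
Proof. unfold Ic. simpl pow. rewrite RInt_const. unfold scal; simpl; unfold mult; simpl. ring. Qed.

Lemma J0 : Jc 0 = (PI/2)^3/3.
Proof.
  unfold Jc. rewrite (RInt_from_der (fun x => x^3/3)).
  - simpl; field.
  - intros x. auto_derive; auto. simpl; field.
  - intros; auto_derive; auto.
Qed.

Lemma Ipos m : 0 < Ic (2*m).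
Proof.
  induction m.
  - simpl (2*0)%nat. rewrite I0. generalize PI_RGT_0; lra.
  - replace (2 * S m)%nat with (S (S (2*m))) by lia.
    assert (H := I_rec (2*m)).
    assert (0 < INR (S (S (2*m)))) by (apply lt_0_INR; lia).
    assert (0 < INR (S (2*m))) by (apply lt_0_INR; lia).
    assert (0 < INR (S (2 * m)) * Ic (2 * m)) by (apply Rmult_lt_0_compat; auto).
    apply (Rmult_lt_reg_l (INR (S (S (2*m))))); auto. lra.
Qed.

Lemma Jnn k : 0 <= Jc k.
Proof.
  apply RInt_ge_0. generalize PI_RGT_0; lra. apply ex_J.
  intros x Hx. apply Rmult_le_pos. apply pow2_ge_0. apply pow_le. apply cos_nonneg; lra.
Qed.

Definition Kc m := Jc (2*m) / Ic (2*m).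

Lemma tel m : / (INR (S m))^2 = 2 * (Kc m - Kc (S m)).
Proof.
  unfold Kc. replace (2 * S m)%nat with (S (S (2*m))) by lia.
  assert (Hp1 := Ipos m). assert (Hp2 := Ipos (S m)). replace (2 * S m)%nat with (S (S (2*m))) in Hp2 by lia.
  assert (H1 := I_rec (2*m)). assert (H2 := J_rec (2*m)).
  assert (I2 : INR 2 = 2) by (simpl; ring).
  rewrite !S_INR, mult_INR, I2 in H1, H2. rewrite S_INR.
  set (a := Ic (2*m)) in *. set (b := Ic (S (S (2*m)))) in *.
  set (J := Jc (2*m)) in *. set (J' := Jc (S (S (2*m)))) in *.
  assert (0 <= INR m) by apply pos_INR.
  assert (Hb : b = (2 * INR m + 1) / (2 * INR m + 1 + 1) * a).
  { apply (Rmult_eq_reg_l (2 * INR m + 1 + 1)). rewrite H1. field. lra. lra. }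
  assert (HJ : J' = ((2 * INR m + 1 + 1) * (2 * INR m + 1) / 2 * J - b) * 2 / (2 * INR m + 1 + 1)^2).
  { assert (H3 : (2 * INR m + 1 + 1) ^ 2 / 2 * J' = (2 * INR m + 1 + 1) * (2 * INR m + 1) / 2 * J - b) by lra.
    rewrite <- H3. field. lra. }
  rewrite HJ. rewrite Hb. field. repeat split; lra.
Qed.

Lemma Kbound m : 0 <= Kc (S m) <= / INR (S m).
Proof.
  unfold Kc. replace (2 * S m)%nat with (S (S (2*m))) by lia.
  assert (Hp1 := Ipos m). assert (Hp2 := Ipos (S m)). replace (2 * S m)%nat with (S (S (2*m))) in Hp2 by lia.
  assert (H1 := I_rec (2*m)). assert (H3 := J_bound (2*m)). assert (H4 := Jnn (S (S (2*m)))).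
  assert (I2 : INR 2 = 2) by (simpl; ring).
  rewrite !S_INR, mult_INR, I2 in H1. rewrite S_INR.
  set (a := Ic (2*m)) in *. set (b := Ic (S (S (2*m)))) in *.
  set (J' := Jc (S (S (2*m)))) in *.
  assert (0 <= INR m) by apply pos_INR.
  assert (E : a - b = b / (2 * INR m + 1)).
  { apply (Rmult_eq_reg_l (2 * INR m + 1)). field_simplify. lra. lra. lra. }
  split. apply Rdiv_le_0_compat; lra.
  apply Rle_trans with ((b / (2 * INR m + 1)) / b).
  - unfold Rdiv. apply Rmult_le_compat_r. left; apply Rinv_0_lt_compat; lra. lra.
  - replace (b / (2 * INR m + 1) / b) with (/ (2 * INR m + 1)) by (field; lra).
    apply Rinv_le_contravar; lra.
Qed.

Lemma partial N : sum_f_R0 (fun m => / (INR (S m))^2) N = 2 * (Kc 0 - Kc (S N)).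
Proof.
  induction N.
  - change (sum_f_R0 (fun m => / (INR (S m))^2) 0) with (/ (INR 1)^2). rewrite (tel 0). ring.
  - rewrite tech5, IHN. rewrite (tel (S N)). ring.
Qed.

Lemma K0 : Kc 0 = PI^2/12.
Proof. unfold Kc. simpl (2*0)%nat. rewrite I0, J0. field. generalize PI_RGT_0; lra. Qed.

Lemma basel : is_series (fun n => / (INR (S n))^2) (PI^2/6).
Proof.
  apply lim_series. apply (lim_bound _ (fun n => 2 * / INR (S n))).
  - intro n. rewrite sum_n_Reals, partial, K0. destruct (Kbound n).
    rewrite Rabs_left1. lra. lra.
  - replace (Finite 0) with (Rbar_mult 2 0) by (simpl; f_equal; ring).
    apply is_lim_seq_scal_l. apply lim_inv_S.
Qed.

Definition c2 n := / (INR (S n))^2.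
Definition e2 n := / INR (S n).

Lemma INR_S_pos n : 0 < INR (S n).
Proof. apply lt_0_INR; lia. Qed.

Lemma Li2_eq x : Li2 x = PSeries (PS_incr_1 c2) x.
Proof.
  rewrite PSeries_incr_1. unfold Li2, PSeries. rewrite <- Series_scal_l. apply Series_ext; intro n.
  unfold c2. assert (H := INR_S_pos n). rewrite <- tech_pow_Rmult. field. apply Rgt_not_eq; exact H.
Qed.

Lemma basel_c2 : is_series c2 (PI^2/6).
Proof. exact basel. Qed.

Lemma CV_c2 : Rbar_le 1 (CV_radius c2).
Proof.
  apply (proj1 (Lub_Rbar_correct (CV_disk c2))). unfold CV_disk.
  exists (PI^2/6). apply (is_series_ext c2). intro n. rewrite pow1, Rmult_1_r.
  rewrite Rabs_pos_eq. auto. unfold c2. left; apply Rinv_0_lt_compat. apply pow_lt, INR_S_pos.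
  apply basel_c2.
Qed.

Lemma CV_e2 : Rbar_le 1 (CV_radius e2).
Proof.
  rewrite (CV_radius_ext e2 (PS_derive (PS_incr_1 c2))).
  rewrite CV_radius_derive, CV_radius_incr_1. apply CV_c2.
  intro n. unfold PS_derive. change (PS_incr_1 c2 (S n)) with (c2 n). unfold e2, c2. assert (H := INR_S_pos n). field. lra.
Qed.

Lemma in_rad_e2 x : Rabs x < 1 -> Rbar_lt (Rabs x) (CV_radius e2).
Proof. intro H. apply (Rbar_lt_le_trans _ 1). exact H. apply CV_e2. Qed.
Lemma in_rad_c2 x : Rabs x < 1 -> Rbar_lt (Rabs x) (CV_radius (PS_incr_1 c2)).
Proof. intro H. rewrite CV_radius_incr_1. apply (Rbar_lt_le_trans _ 1). exact H. apply CV_c2. Qed.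
Lemma in_rad_e2' x : Rabs x < 1 -> Rbar_lt (Rabs x) (CV_radius (PS_incr_1 e2)).
Proof. intro H. rewrite CV_radius_incr_1. apply in_rad_e2; auto. Qed.

Lemma geomP t : Rabs t < 1 -> PSeries (PS_derive (PS_incr_1 e2)) t = / (1 - t).
Proof.
  intro H. rewrite (PSeries_ext _ (fun _ => 1)).
  - unfold PSeries. apply is_series_unique. apply (is_series_ext (fun n => t^n)).
    intro n; symmetry; apply Rmult_1_l. apply is_series_geom; auto.
  - intro n. unfold PS_derive. change (PS_incr_1 e2 (S n)) with (e2 n). unfold e2. assert (H1 := INR_S_pos n). field. lra.
Qed.

Lemma Lser x : 0 <= x < 1 -> PSeries (PS_incr_1 e2) x = - ln (1 - x).
Proof.
  intros Hx.
  assert (Hseg : forall t, Rmin 0 x <= t <= Rmax 0 x -> 0 <= t < 1).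
  { intros t. rewrite Rmin_left, Rmax_right by lra. lra. }
  assert (H1 : is_RInt (fun t => / (1 - t)) 0 x (minus (PSeries (PS_incr_1 e2) x) (PSeries (PS_incr_1 e2) 0))).
  { apply (@is_RInt_derive R_CompleteNormedModule).
    - intros t Ht. apply Hseg in Ht. rewrite <- geomP by (rewrite Rabs_pos_eq; lra).
      apply is_derive_PSeries. apply in_rad_e2'. rewrite Rabs_pos_eq; lra.
    - intros t Ht. apply Hseg in Ht. apply cont_of_der. auto_derive. lra. }
  assert (H2 : is_RInt (fun t => / (1 - t)) 0 x (minus ((fun t => - ln (1 - t)) x) ((fun t => - ln (1 - t)) 0))).
  { apply (@is_RInt_derive R_CompleteNormedModule (fun t => - ln (1 - t))).
    - intros t Ht. apply Hseg in Ht. auto_derive. lra. field. lra.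
    - intros t Ht. apply Hseg in Ht. apply cont_of_der. auto_derive. lra. }
  apply (@is_RInt_unique R_CompleteNormedModule) in H1. apply (@is_RInt_unique R_CompleteNormedModule) in H2. rewrite H1 in H2.
  cbv beta in H2. rewrite !PSeries_incr_1 in H2 |- *. rewrite Rminus_0_r, ln_1 in H2.
  unfold minus, plus, opp in H2; simpl in H2. rewrite PSeries_0 in H2. simpl in H2. unfold zero in H2. simpl in H2. lra.
Qed.

Lemma Li2_der x : 0 < x < 1 -> is_derive Li2 x (- ln (1 - x) / x).
Proof.
  intros Hx. apply (is_derive_ext (PSeries (PS_incr_1 c2))). intro t; rewrite Li2_eq; auto.
  replace (- ln (1 - x) / x) with (PSeries (PS_derive (PS_incr_1 c2)) x).
  apply is_derive_PSeries. apply in_rad_c2. rewrite Rabs_pos_eq; lra.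
  rewrite (PSeries_ext _ e2).
  - rewrite <- Lser by lra. rewrite PSeries_incr_1. field. lra.
  - intro n. unfold PS_derive. change (PS_incr_1 c2 (S n)) with (c2 n). unfold e2, c2. assert (H1 := INR_S_pos n). field. lra.
Qed.

Lemma pow_le1 x n : 0 <= x <= 1 -> x ^ n <= 1.
Proof. intros Hx. induction n. simpl; lra. simpl. assert (0 <= x ^ n) by (apply pow_le; lra). nra. Qed.

Lemma Li2_terms_le x n : 0 <= x <= 1 -> 0 <= x ^ S n / INR (S n) ^ 2 <= c2 n.
Proof.
  intros Hx. assert (H := INR_S_pos n). unfold c2, Rdiv.
  assert (0 < / INR (S n) ^ 2) by (apply Rinv_0_lt_compat, pow_lt; auto).
  assert (0 <= x ^ S n <= 1) by (split; [apply pow_le; lra | apply pow_le1; lra]).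
  split. apply Rmult_le_pos; lra. rewrite <- (Rmult_1_l (/ _)) at 2. apply Rmult_le_compat_r; lra.
Qed.

Lemma Li2_ex x : 0 <= x <= 1 -> ex_series (fun n => x ^ S n / INR (S n) ^ 2).
Proof.
  intro Hx. apply (@ex_series_le R_AbsRing R_CompleteNormedModule _ c2).
  - intro n. destruct (Li2_terms_le x n Hx). change (Rabs (x ^ S n / INR (S n) ^ 2) <= c2 n). rewrite Rabs_pos_eq; lra.
  - exists (PI^2/6). apply basel_c2.
Qed.

Lemma Li2_le x : 0 <= x <= 1 -> Li2 x <= PI^2/6.
Proof.
  intro Hx. unfold Li2. rewrite <- (is_series_unique _ _ basel_c2).
  apply Series_le. intro n; apply Li2_terms_le; auto. exists (PI^2/6); apply basel_c2.
Qed.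

Lemma series_ge_partial u l N : is_series u l -> (forall n, 0 <= u n) -> sum_f_R0 u N <= l.
Proof.
  intros Hs Hp.
  assert (Hmono : forall k, sum_f_R0 u N <= sum_f_R0 u (k + N)).
  { induction k. simpl; lra. simpl (S k + N)%nat. rewrite tech5. specialize (Hp (S (k + N))). lra. }
  assert (Hl : is_lim_seq (sum_n u) l) by exact Hs.
  apply (is_lim_seq_incr_n _ N) in Hl.
  assert (H := is_lim_seq_le (fun _ => sum_f_R0 u N) (fun k => sum_n u (k + N)) (sum_f_R0 u N) l).
  simpl in H. apply H. intro k. rewrite sum_n_Reals. apply Hmono. apply is_lim_seq_const. exact Hl.
Qed.

Lemma Li2_ge x N : 0 <= x <= 1 -> x ^ S N * sum_f_R0 c2 N <= Li2 x.
Proof.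
  intros Hx. apply Rle_trans with (sum_f_R0 (fun n => x ^ S n / INR (S n) ^ 2) N).
  - rewrite scal_sum. apply sum_Rle. intros n Hn.
    assert (Hp : x ^ S N <= x ^ S n).
    { replace (S N) with (S n + (N - n))%nat by lia. rewrite pow_add.
      assert (0 <= x ^ S n) by (apply pow_le; lra).
      assert (x ^ (N - n) <= 1) by (apply pow_le1; lra).
      assert (0 <= x ^ (N - n)) by (apply pow_le; lra). nra. }
    unfold c2, Rdiv. assert (H := INR_S_pos n).
    assert (0 < / INR (S n) ^ 2) by (apply Rinv_0_lt_compat, pow_lt; auto). nra.
  - unfold Li2. apply series_ge_partial. apply Series_correct, Li2_ex; auto.
    intro n; apply Li2_terms_le; auto.
Qed.

Lemma bern x n : 0 <= x <= 1 -> 1 - INR n * (1 - x) <= x ^ n.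
Proof.
  intros Hx. induction n. simpl; lra.
  rewrite S_INR. simpl pow. assert (0 <= INR n) by apply pos_INR. assert (0 <= INR n * ((1 - x) * (1 - x))) by (apply Rmult_le_pos; nra). assert (0 <= x * (x ^ n - (1 - INR n * (1 - x)))) by (apply Rmult_le_pos; lra). nra.
Qed.

Lemma sum_c2_nonneg N : 0 <= sum_f_R0 c2 N.
Proof. apply cond_pos_sum. intro n. unfold c2. left; apply Rinv_0_lt_compat, pow_lt, INR_S_pos. Qed.

Lemma Li2_near1 d : 0 < d -> exists eta, 0 < eta /\ forall x, 0 <= x <= 1 -> 1 - eta <= x -> PI^2/6 - Li2 x < d.
Proof.
  intros Hd.
  assert (Hl : is_lim_seq (sum_n c2) (PI^2/6)) by exact basel_c2.
  apply is_lim_seq_spec in Hl. destruct (Hl (mkposreal (d/2) ltac:(lra))) as [N HN].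
  specialize (HN N (le_n N)). simpl in HN. rewrite sum_n_Reals in HN.
  assert (HZ := sum_c2_nonneg N).
  assert (HZ2 : sum_f_R0 c2 N <= PI^2/6).
  { apply series_ge_partial. apply basel_c2. intro n; unfold c2; left; apply Rinv_0_lt_compat, pow_lt, INR_S_pos. }
  assert (HPI : PI^2/6 <= 3) by (generalize PI_4 PI_RGT_0; intros; nra).
  assert (HN1 := INR_S_pos N).
  exists (d / (6 * INR (S N))). split. apply Rdiv_lt_0_compat; lra.
  intros x Hx Hx2.
  assert (H1 := Li2_ge x N Hx). assert (H2 := bern x (S N) Hx).
  apply Rabs_lt_between in HN.
  assert (H3 : INR (S N) * (1 - x) <= d / 6).
  { apply Rle_trans with (INR (S N) * (d / (6 * INR (S N)))). apply Rmult_le_compat_l; lra.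
    right; field; lra. }
  nra.
Qed.

Lemma ln_lt_self w : 0 < w -> ln w < w.
Proof.
  intro Hw. rewrite <- (ln_exp w) at 2. apply ln_increasing. auto.
  generalize (exp_ineq1_le w); lra.
Qed.

Lemma eps_choice y A d : 0 < y -> 0 <= A -> 0 < d ->
  exists e, 0 < e <= y /\ e * A < d /\ Rabs (e * ln (1 - exp (- e))) < d /\
            Rabs (PI^2/6 - Li2 (exp (- e))) < d.
Proof.
  intros Hy HA Hd.
  destruct (Li2_near1 d Hd) as [eta [Heta HL]].
  set (w := 2 + 12 / d + 2 / y + 2 / eta + 6 * A / d).
  assert (H12 : 0 <= 12 / d) by (apply Rdiv_le_0_compat; lra).
  assert (Hy2 : 0 < 2 / y) by (apply Rdiv_lt_0_compat; lra).
  assert (He2 : 0 < 2 / eta) by (apply Rdiv_lt_0_compat; lra).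
  assert (HA2 : 0 <= 6 * A / d) by (apply Rdiv_le_0_compat; lra).
  assert (Hw : 2 <= w) by (unfold w; lra).
  set (e := 2 / (w * w)).
  assert (He0 : 0 < e) by (unfold e; apply Rdiv_lt_0_compat; nra).
  assert (Hew : e <= 2 / w).
  { unfold e. replace (2/(w*w)) with ((2/w) * (/ w)) by (field; lra).
    assert (0 <= 2 / w) by (apply Rdiv_le_0_compat; lra).
    assert (/ w <= 1) by (rewrite <- Rinv_1; apply Rinv_le_contravar; lra).
    assert (0 <= / w) by (left; apply Rinv_0_lt_compat; lra). nra. }
  assert (Hw1 : 2 / w <= 1).
  { assert (/ w <= / 2) by (apply Rinv_le_contravar; lra). unfold Rdiv. lra. }
  assert (Hyw : 2 / w <= y).
  { apply (Rmult_le_reg_r w). lra. unfold Rdiv. rewrite Rmult_assoc, Rinv_l by lra.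
    assert (y * (2 / y) = 2) by (field; lra). unfold w. nra. }
  assert (Hetaw : 2 / w <= eta).
  { apply (Rmult_le_reg_r w). lra. unfold Rdiv. rewrite Rmult_assoc, Rinv_l by lra.
    assert (eta * (2 / eta) = 2) by (field; lra). unfold w. nra. }
  assert (Hdw : 12 / w <= d).
  { apply (Rmult_le_reg_r w). lra. unfold Rdiv at 1. rewrite Rmult_assoc, Rinv_l by lra.
    assert (d * (12 / d) = 12) by (field; lra). unfold w. nra. }
  assert (HAw : 2 * A / w < d).
  { apply (Rmult_lt_reg_r w). lra. unfold Rdiv at 1. rewrite Rmult_assoc, Rinv_l by lra.
    assert (d * (6 * A / d) = 6 * A) by (field; lra). unfold w. nra. }
  exists e. split. split. lra. lra.
  split.
  { apply Rle_lt_trans with (2 / w * A). apply Rmult_le_compat_r; lra.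
    replace (2 / w * A) with (2 * A / w) by (field; lra). lra. }
  split.
  -
    assert (Hexp1 := exp_ineq1_le e).
    assert (Hem : exp (- e) <= 1 - e / 2).
    { rewrite exp_Ropp. apply (Rmult_le_reg_l (exp e)). apply exp_pos.
      rewrite Rinv_r by (apply Rgt_not_eq, exp_pos).
      assert (e <= 1) by lra. assert (0 <= 1 - e / 2) by lra.
      apply Rle_trans with ((1 + e) * (1 - e/2)). nra.
      apply Rmult_le_compat_r; lra. }
    assert (Hep := exp_pos (- e)).
    assert (Hlo : ln (e / 2) <= ln (1 - exp (- e))) by (apply ln_le; lra).
    assert (Hhi : ln (1 - exp (- e)) < 0).
    { rewrite <- ln_1. apply ln_increasing; lra. }
    assert (He2w : e / 2 = / (w * w)) by (unfold e; field; lra).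
    rewrite He2w, ln_Rinv in Hlo by nra. rewrite ln_mult in Hlo by lra.
    assert (Hlw := ln_lt_self w ltac:(lra)).
    assert (Hlw0 : 0 < ln w) by (rewrite <- ln_1; apply ln_increasing; lra).
    rewrite Rabs_left1.
    + apply Rle_lt_trans with (e * (2 * w)).
      * assert (- ln (1 - exp (- e)) <= 2 * w) by lra.
        replace (- (e * ln (1 - exp (- e)))) with (e * (- ln (1 - exp (- e)))) by ring.
        apply Rmult_le_compat_l; lra.
      * replace (e * (2 * w)) with (4 / w) by (unfold e; field; lra).
        apply Rlt_le_trans with (12 / w). unfold Rdiv; apply Rmult_lt_compat_r. apply Rinv_0_lt_compat; lra. lra.
        lra.
    + assert (0 <= e * - ln (1 - exp (- e))) by (apply Rmult_le_pos; lra). lra.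
  - assert (Hexp1 := exp_ineq1_le (- e)). assert (Hep := exp_pos (- e)).
    assert (exp (- e) <= 1) by (rewrite <- exp_0; left; apply exp_increasing; lra).
    assert (Hli := Li2_le (exp (- e)) ltac:(lra)).
    rewrite Rabs_pos_eq by lra. apply HL. lra. lra.
Qed.

Lemma iRplus (f g : R -> R) a b (l1 l2 : R) : is_RInt f a b l1 -> is_RInt g a b l2 -> is_RInt (fun t => f t + g t) a b (l1 + l2).
Proof. intros H1 H2. exact (@is_RInt_plus R_NormedModule f g a b l1 l2 H1 H2). Qed.
Lemma iRminus (f g : R -> R) a b (l1 l2 : R) : is_RInt f a b l1 -> is_RInt g a b l2 -> is_RInt (fun t => f t - g t) a b (l1 - l2).
Proof. intros H1 H2. exact (@is_RInt_minus R_NormedModule f g a b l1 l2 H1 H2). Qed.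
Lemma iRscal (f : R -> R) a b k (l : R) : is_RInt f a b l -> is_RInt (fun t => k * f t) a b (k * l).
Proof. intros H1. exact (@is_RInt_scal R_NormedModule f a b k l H1). Qed.
Lemma iRext (f g : R -> R) a b (l : R) : (forall x, f x = g x) -> is_RInt f a b l -> is_RInt g a b l.
Proof. intros H1 H2. apply (@is_RInt_ext R_NormedModule f g a b l); auto. Qed.
Lemma iRval (f : R -> R) a b (l l' : R) : is_RInt f a b l -> l = l' -> is_RInt f a b l'.
Proof. intros H ->; auto. Qed.
Lemma iRder (F f : R -> R) a b : a <= b -> (forall x, a <= x <= b -> is_derive F x (f x)) ->
  (forall x, a <= x <= b -> continuous f x) -> is_RInt f a b (F b - F a).
Proof.
  intros Hab H1 H2. apply (@is_RInt_derive R_CompleteNormedModule F f a b).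
  intros x Hx; apply H1; rewrite Rmin_left, Rmax_right in Hx; lra.
  intros x Hx; apply H2; rewrite Rmin_left, Rmax_right in Hx; lra.
Qed.
Lemma RInt_u (f : R -> R) a b (l : R) : is_RInt f a b l -> RInt f a b = l.
Proof. intro H. exact (@is_RInt_unique R_CompleteNormedModule f a b l H). Qed.
Lemma ex_R (f : R -> R) a b (l : R) : is_RInt f a b l -> ex_RInt f a b.
Proof. intro H; exists l; exact H. Qed.

Definition aB (B : nat -> R) n := (-1)^n * B n / INR (Factorial.fact n).

Lemma fact_pos n : 0 < INR (Factorial.fact n).
Proof. apply lt_0_INR. apply Factorial.lt_O_fact. Qed.

Lemma gen_series B (hB : is_Bernoulli B) t : 0 < t < 2 * PI ->
  is_series (fun n => aB B n * t ^ n) (t / (1 - exp (- t))).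
Proof.
  intros Ht. assert (H := hB (- t) ltac:(lra) ltac:(rewrite Rabs_Ropp, Rabs_pos_eq; lra)).
  assert (He : exp (- t) < 1) by (rewrite <- exp_0; apply exp_increasing; lra).
  replace (t / (1 - exp (- t))) with (- t / (exp (- t) - 1)) by (field; lra).
  apply (is_series_ext (fun n => B n * (- t) ^ n / INR (Factorial.fact n))); auto.
  intro n. match goal with |- ?a = ?b => change (@eq R a b) end. unfold aB. replace (- t) with ((-1) * t) by ring. rewrite Rpow_mult_distr.
  assert (H1 := fact_pos n). field. lra.
Qed.

Lemma rad B (hB : is_Bernoulli B) x : 0 <= x < 2 * PI -> Rbar_lt (Rabs x) (CV_radius (aB B)).
Proof.
  intros Hx. set (r := (x + 2 * PI) / 2).
  assert (Hr : Rbar_le r (CV_radius (aB B))).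
  { apply Rbar_not_lt_le. intro Hlt. apply (CV_disk_outside (aB B) r).
    rewrite Rabs_pos_eq. auto. unfold r; lra.
    apply ex_series_lim_0. exists (r / (1 - exp (- r))). apply gen_series; auto. unfold r; lra. }
  apply (Rbar_lt_le_trans _ r); auto. rewrite Rabs_pos_eq by lra. simpl. unfold r; lra.
Qed.

Lemma F_val B (hB : is_Bernoulli B) t : 0 < t < 2 * PI -> PSeries (aB B) t = t / (1 - exp (- t)).
Proof. intros Ht. unfold PSeries. apply is_series_unique. apply gen_series; auto. Qed.

Lemma pseries_lim a t : Rbar_lt (Rabs t) (CV_radius a) ->
  is_lim_seq (fun N => sum_f_R0 (fun n => a n * t ^ n) N) (PSeries a t).
Proof.
  intro H. assert (H1 := PSeries_correct a t (CV_radius_inside a t H)).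
  apply is_pseries_R in H1.
  apply (is_lim_seq_ext (sum_n (fun n => a n * t ^ n))). intro; apply sum_n_Reals. exact H1.
Qed.

Lemma tail_bound a y t N : Rbar_lt (Rabs y) (CV_radius a) -> 0 <= t <= y ->
  Rabs (PSeries a t - sum_f_R0 (fun n => a n * t ^ n) N)
  <= Series (fun n => Rabs (a n * y ^ n)) - sum_f_R0 (fun n => Rabs (a n * y ^ n)) N.
Proof.
  intros Hy Ht.
  assert (Hterm : forall n, Rabs (a n * t ^ n) <= Rabs (a n * y ^ n)).
  { intro n. rewrite !Rabs_mult. apply Rmult_le_compat_l. apply Rabs_pos.
    rewrite <- !RPow_abs. apply pow_incr. rewrite !Rabs_pos_eq; lra. }
  assert (Hk : forall k, Rabs (sum_f_R0 (fun n => a n * t ^ n) (k + N) - sum_f_R0 (fun n => a n * t ^ n) N)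
       <= sum_f_R0 (fun n => Rabs (a n * y ^ n)) (k + N) - sum_f_R0 (fun n => Rabs (a n * y ^ n)) N).
  { induction k. simpl. rewrite Rminus_diag, Rabs_R0. lra.
    simpl (S k + N)%nat. rewrite !tech5.
    replace (sum_f_R0 (fun n : nat => a n * t ^ n) (k + N) + a (S (k + N)) * t ^ S (k + N) -
        sum_f_R0 (fun n : nat => a n * t ^ n) N)
      with ((sum_f_R0 (fun n : nat => a n * t ^ n) (k + N) - sum_f_R0 (fun n : nat => a n * t ^ n) N) + a (S (k + N)) * t ^ S (k + N)) by ring.
    eapply Rle_trans. apply Rabs_triang. specialize (Hterm (S (k + N))). lra. }
  assert (Ht' : Rbar_lt (Rabs t) (CV_radius a)).
  { apply (Rbar_le_lt_trans _ (Rabs y)); auto. simpl. rewrite !Rabs_pos_eq; lra. }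
  assert (L1 := pseries_lim a t Ht'). apply (is_lim_seq_incr_n _ N) in L1.
  assert (L1' : is_lim_seq (fun k => Rabs (sum_f_R0 (fun n => a n * t ^ n) (k + N) - sum_f_R0 (fun n => a n * t ^ n) N))
          (Rabs (PSeries a t - sum_f_R0 (fun n => a n * t ^ n) N))).
  { apply (is_lim_seq_abs _ (PSeries a t - sum_f_R0 (fun n => a n * t ^ n) N)).
    apply is_lim_seq_minus'; auto. apply is_lim_seq_const. }
  assert (L2 : is_lim_seq (fun k => sum_f_R0 (fun n => Rabs (a n * y ^ n)) (k + N) - sum_f_R0 (fun n => Rabs (a n * y ^ n)) N)
          (Series (fun n => Rabs (a n * y ^ n)) - sum_f_R0 (fun n => Rabs (a n * y ^ n)) N)).
  { apply is_lim_seq_minus'; [| apply is_lim_seq_const].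
    apply (is_lim_seq_incr_n (fun k => sum_f_R0 (fun n => Rabs (a n * y ^ n)) k) N).
    apply (is_lim_seq_ext (sum_n (fun n => Rabs (a n * y ^ n)))). intro; apply sum_n_Reals.
    apply Series_correct. apply CV_disk_inside; auto. }
  assert (H := is_lim_seq_le _ _ _ _ Hk L1' L2). simpl in H. exact H.
Qed.

Lemma Rrem_S n y : Rrem (S n) y = Rrem n y - y ^ S n / INR (Factorial.fact (S n)).
Proof. unfold Rrem. rewrite tech5. ring. Qed.

Lemma Rrem_int n y : 0 <= y -> is_RInt (fun t => exp (y - t) * (t ^ n / INR (Factorial.fact n))) 0 y (Rrem n y).
Proof.
  intros Hy. induction n.
  - apply (iRval _ _ _ ((fun t => - exp (y - t)) y - (fun t => - exp (y - t)) 0)).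
    + apply (iRder (fun t => - exp (y - t))); auto. intros x _. auto_derive; auto. replace (y + - x) with (y - x) by ring. simpl. field.
      intros x _. apply cont_of_der. auto_derive; auto.
    + cbv beta. unfold Rrem. simpl. rewrite Rminus_diag, exp_0, Rminus_0_r. field.
  - set (G := fun t => - exp (y - t) * (t ^ S n / INR (Factorial.fact (S n)))).
    assert (H1 : is_RInt (fun t => exp (y - t) * (t ^ S n / INR (Factorial.fact (S n))) - exp (y - t) * (t ^ n / INR (Factorial.fact n))) 0 y
             (G y - G 0)).
    { apply (iRder G); auto.
      - intros x _. unfold G. auto_derive.
        + assert (H := fact_pos (S n)). lra.
        + rewrite fact_simpl, mult_INR. rewrite mINR. assert (H := fact_pos n).
          assert (H2 : 0 < INR (S n)) by (apply lt_0_INR; lia).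
          rewrite <- tech_pow_Rmult. replace (y + - x) with (y - x) by ring. change (Factorial.fact n + n * Factorial.fact n)%nat with (S n * Factorial.fact n)%nat. rewrite mult_INR. field. lra.
      - intros x _. apply cont_of_der. auto_derive. generalize (fact_pos n) (fact_pos (S n)); intros; repeat split; auto; lra. }
    assert (H2 := iRplus _ _ _ _ _ _ H1 IHn).
    apply (iRval _ _ _ (G y - G 0 + Rrem n y)).
    + eapply iRext; [| exact H2]. intro x; cbv beta; ring.
    + unfold G. rewrite Rrem_S. rewrite Rminus_diag, exp_0. rewrite pow_i by lia. field.
      assert (H := fact_pos (S n)). lra.
Qed.

Lemma SN_int B y N : 0 <= y ->
  is_RInt (fun t => exp (y - t) * sum_f_R0 (fun n => aB B n * t ^ n) N) 0 y
    (sum_f_R0 (fun n => (-1) ^ n * B n * Rrem n y) N).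
Proof.
  intros Hy. induction N.
  - simpl sum_f_R0. apply (iRext (fun t => ((-1) ^ 0 * B 0%nat) * (exp (y - t) * (t ^ 0 / INR (Factorial.fact 0))))).
    + intro t. unfold aB. simpl. field.
    + apply iRscal. apply Rrem_int; auto.
  - apply (iRext (fun t => exp (y - t) * sum_f_R0 (fun n => aB B n * t ^ n) N +
                  ((-1) ^ S N * B (S N)) * (exp (y - t) * (t ^ S N / INR (Factorial.fact (S N)))))).
    + intro t. rewrite tech5. unfold aB. assert (H := fact_pos (S N)). field. lra.
    + rewrite tech5. apply iRplus; auto. apply iRscal. apply Rrem_int; auto.
Qed.

Definition Gf t := t * ln (1 - exp (- t)) - Li2 (exp (- t)).

Lemma G_der B (hB : is_Bernoulli B) t : 0 < t < 2 * PI -> is_derive Gf t (exp (- t) * PSeries (aB B) t).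
Proof.
  intros Ht.
  assert (He : 0 < exp (- t) < 1).
  { split. apply exp_pos. rewrite <- exp_0; apply exp_increasing; lra. }
  assert (H1 : is_derive (fun t => t * ln (1 - exp (- t))) t (ln (1 - exp (- t)) + t * (exp (- t) / (1 - exp (- t))))).
  { auto_derive. lra. replace (1 + - exp (- t)) with (1 - exp (- t)) by ring. field. lra. }
  assert (H2e : is_derive (fun t => exp (- t)) t (- exp (- t))).
  { auto_derive; auto. ring. }
  assert (H2 := @is_derive_comp R_AbsRing R_NormedModule Li2 (fun t => exp (- t)) t _ _ (Li2_der (exp (- t)) He) H2e).
  assert (H3 := @is_derive_minus R_AbsRing R_NormedModule _ _ t _ _ H1 H2).
  rewrite F_val by auto.
  replace (exp (- t) * (t / (1 - exp (- t)))) with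
    (minus (ln (1 - exp (- t)) + t * (exp (- t) / (1 - exp (- t)))) (scal (- exp (- t)) (- ln (1 - exp (- t)) / exp (- t)))).
  - exact H3.
  - unfold minus, plus, opp, scal; simpl. unfold mult; simpl. field. lra.
Qed.

Lemma lim_scal (u : nat -> R) (l c : R) : is_lim_seq u l -> is_lim_seq (fun n => c * u n) (c * l).
Proof. intro H. exact (is_lim_seq_scal_l u c l H). Qed.

Lemma cont_F a t : Rbar_lt (Rabs t) (CV_radius a) -> continuous (PSeries a) t.
Proof. intro H. apply continuity_pt_filterlim. apply PSeries_continuity; auto. Qed.

Lemma cont_mul (f g : R -> R) t : continuous f t -> continuous g t -> continuous (fun x => f x * g x) t.
Proof. intros H1 H2. exact (@continuous_mult R_UniformSpace R_AbsRing f g t H1 H2). Qed.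

Theorem mainTheorem7 (B : nat -> R) (hB : is_Bernoulli B) (y : R)
    (hy0 : 0 < y) (hy1 : y < 2 * PI) :
  is_series (fun n => (-1) ^ n * B n * Rrem n y)
    (exp y * (y * ln (1 - exp (- y)) - Li2 (exp (- y)) + PI ^ 2 / 6)).
Proof.
  set (a := aB B).
  assert (Hrt : forall t, 0 <= t <= y -> Rbar_lt (Rabs t) (CV_radius a)).
  { intros t Ht. apply rad; auto. lra. }
  assert (Hry := Hrt y ltac:(lra)).
  set (A := Series (fun n => Rabs (a n * y ^ n))).
  set (P := fun N => sum_f_R0 (fun n => Rabs (a n * y ^ n)) N).
  assert (HP : is_lim_seq P A).
  { apply (is_lim_seq_ext (sum_n (fun n => Rabs (a n * y ^ n)))). intro; apply sum_n_Reals.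
    apply Series_correct. apply CV_disk_inside; auto. }
  assert (Hcont : forall t, 0 <= t <= y -> continuous (PSeries a) t).
  { intros t Ht. apply cont_F. apply Hrt; auto. }
  assert (HFb : forall t, 0 <= t <= y -> Rabs (PSeries a t) <= A).
  { intros t Ht. assert (H := tail_bound a y t 0 Hry Ht). simpl in H.
    replace (PSeries a t) with ((PSeries a t - a 0%nat * 1) + a 0%nat * 1) by ring.
    eapply Rle_trans. apply Rabs_triang. fold A in H. rewrite Rabs_mult, Rabs_R1 in *. lra. }
  set (g0 := fun t => exp (y - t) * PSeries a t).
  assert (Hg0 : ex_RInt g0 0 y).
  { apply ex_RInt_cont. rewrite Rmin_left, Rmax_right by lra. intros t Ht.
    apply cont_mul. apply cont_of_der; auto_derive; auto. apply Hcont; auto. }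
  set (I := RInt g0 0 y).
  assert (Hser : is_series (fun n => (-1) ^ n * B n * Rrem n y) I).
  { apply lim_series. apply (is_lim_seq_ext (fun N => sum_f_R0 (fun n => (-1) ^ n * B n * Rrem n y) N)).
    intro; symmetry; apply sum_n_Reals.
    apply (lim_bound _ (fun N => y * (exp y * (A - P N)))).
    - intro N.
      assert (HS := SN_int B y N ltac:(lra)).
      assert (Hdiff := iRminus _ _ _ _ _ _ HS (RInt_correct _ _ _ Hg0)).
      fold I in Hdiff. rewrite <- (RInt_u _ _ _ _ Hdiff).
      apply Rle_trans with ((y - 0) * (exp y * (A - P N))); [| right; ring].
      apply abs_RInt_le_const. lra. eapply ex_R; exact Hdiff.
      intros t Ht. unfold g0.
      replace (exp (y - t) * sum_f_R0 (fun n : nat => aB B n * t ^ n) N - exp (y - t) * PSeries a t)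
        with (- exp (y - t) * (PSeries a t - sum_f_R0 (fun n : nat => a n * t ^ n) N)) by (unfold a; ring).
      rewrite Rabs_mult, Rabs_Ropp, Rabs_pos_eq by (left; apply exp_pos).
      assert (Htb := tail_bound a y t N Hry Ht). fold A in Htb. fold (P N) in Htb.
      apply Rmult_le_compat. left; apply exp_pos. apply Rabs_pos.
      destruct (Req_dec t 0) as [->|Ht0]; [rewrite Rminus_0_r; lra | left; apply exp_increasing; lra]. auto.
    - replace (Finite 0) with (Finite (y * (exp y * (A - A)))) by (f_equal; ring).
      apply lim_scal. apply lim_scal. apply is_lim_seq_minus'. apply is_lim_seq_const. auto. }
  set (g := fun t => exp (- t) * PSeries a t).
  assert (Hgc : forall t, 0 <= t <= y -> continuous g t).
  { intros t Ht. apply cont_mul. apply cont_of_der; auto_derive; auto. apply Hcont; auto. }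
  assert (Hg : ex_RInt g 0 y).
  { apply ex_RInt_cont. rewrite Rmin_left, Rmax_right by lra. auto. }
  set (Ig := RInt g 0 y).
  assert (HI : I = exp y * Ig).
  { apply RInt_u. apply (iRext (fun t => exp y * g t)).
    - intro t. unfold g, g0. replace (y - t) with (y + - t) by ring. rewrite exp_plus. ring.
    - apply iRscal. exact (@RInt_correct R_CompleteNormedModule g 0 y Hg). }
  assert (HgA : forall t, 0 <= t <= y -> Rabs (g t) <= A).
  { intros t Ht. unfold g. rewrite Rabs_mult, Rabs_pos_eq by (left; apply exp_pos).
    assert (exp (- t) <= 1).
    { destruct (Req_dec t 0) as [->|Ht0]. rewrite Ropp_0, exp_0; lra.
      rewrite <- exp_0; left; apply exp_increasing; lra. }
    assert (Hq := HFb t Ht). assert (0 <= Rabs (PSeries a t)) by apply Rabs_pos.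
    assert (0 < exp (- t)) by apply exp_pos. nra. }
  assert (HA0 : 0 <= A) by (apply Rle_trans with (Rabs (g 0)); [apply Rabs_pos | apply HgA; lra]).
  assert (HIg : Ig = Gf y + PI ^ 2 / 6).
  { destruct (Req_dec (Ig - (Gf y + PI ^ 2 / 6)) 0) as [Heq|Hne]. lra.
    exfalso. set (D := Rabs (Ig - (Gf y + PI ^ 2 / 6))).
    assert (HD : 0 < D) by (apply Rabs_pos_lt; auto).
    destruct (eps_choice y A (D / 3) hy0 HA0 ltac:(lra)) as [e [He [HeA [Hln HLi]]]].
    assert (Hg1 : ex_RInt g 0 e) by (apply (ex_RInt_Chasles_1 g 0 e y); [lra | auto]).
    assert (Hg2 : ex_RInt g e y) by (apply (ex_RInt_Chasles_2 g 0 e y); [lra | auto]).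
    assert (Hspl : RInt g 0 e + RInt g e y = Ig) by exact (@RInt_Chasles R_CompleteNormedModule g 0 e y Hg1 Hg2).
    assert (Hey : RInt g e y = Gf y - Gf e).
    { apply RInt_u. apply iRder. lra.
      - intros t Ht. apply G_der; auto. lra.
      - intros t Ht. apply Hgc. lra. }
    assert (H0e : Rabs (RInt g 0 e) <= (e - 0) * A).
    { apply abs_RInt_le_const. lra. auto. intros t Ht. apply HgA. lra. }
    unfold Gf in Hey.
    apply Rabs_le_between in H0e. rewrite Rminus_0_r in H0e.
    apply Rabs_lt_between in Hln. apply Rabs_lt_between in HLi.
    assert (Hexpr : Ig - (Gf y + PI ^ 2 / 6) = RInt g 0 e - e * ln (1 - exp (- e)) - (PI ^ 2 / 6 - Li2 (exp (- e)))) by (unfold Gf; lra).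
    assert (Hlt : Rabs (Ig - (Gf y + PI ^ 2 / 6)) < D).
    { rewrite Hexpr. unfold Rabs at 1. destruct Rcase_abs; lra. }
    unfold D in Hlt. lra. }
  replace (exp y * (y * ln (1 - exp (- y)) - Li2 (exp (- y)) + PI ^ 2 / 6)) with I.
  exact Hser. rewrite HI, HIg. unfold Gf. match goal with |- ?a = ?b => change (@eq R a b) end. ring.
Qed.
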